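(* Assume the linear model $X_a=X^a\theta^0_a+\epsilon_a$. On the event $\Lambda_a$, if $\lambda\ge2\lambda_0$ and $\mu\ge2\mu_0$, then $$\frac2n\|X^a(\hat\theta^{\lambda,\mu}_a-\theta^0_a)\|_2^2+(\lambda-3B\mu)\|\hat\theta^{\lambda,\mu}_{a,S_0^c}\|_1\le(3\lambda+5B\mu)\|\hat\theta^{\lambda,\mu}_{a,S_0}-\theta^0_{a,S_0}\|_1.$$
   Context: Fix a node $a$. $X_a\in\mathbb{R}^n$ is the observed $a$-th variable, $X^a$ the $n\times p$ observation matrix with $a$-th column set to zero, $X^a_j$ its $j$-th column, $\theta^0_a$ the true coefficient vector, $\epsilon_a$ the noise. $S_0=\{j:\theta^0_{a,j}\neq0\}$. For $S\subseteq\{1,\dots,p\}$ and $\theta\in\mathbb{R}^p$, $\theta_S$ is the vector with entries $\theta_j\mathbf{1}\{j\in S\}$, and $\theta_{S^c}$ has entries $\theta_j\mathbf{1}\{j\notin S\}$. The local difference matrix $D^a$: from a known local neighborhood graph with edge set $E_{\rm local}$, $D$ has a row $e_i-e_j$ per edge $\{i,j\}$, $i<j$, and $D^a$ keeps rows with $a$-th entry $0$. $B$ bounds the number of nonzero entries in any column of $D^a$. $\hat\theta^{\lambda,\mu}_a=\operatorname{argmin}_{\theta_a}\big[\frac1n\|X_a-X^a\theta_a\|_2^2+\lambda\|\theta_a\|_1+\mu\|D^a\theta_a\|_1\big]$. For $\lambda_0,\mu_0>0$, $\Lambda_a:=\{\max_{j\neq a}\frac2n|\epsilon_a'X^a_j|\le\lambda_0+B\mu_0\}$.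 *)

(* Defs.v *)
From HB Require Import structures.
From mathcomp Require Import all_boot all_order all_algebra.
Set Implicit Arguments. Unset Strict Implicit. Unset Printing Implicit Defensive.
Import Order.TTheory GRing.Theory Num.Theory.
Local Open Scope ring_scope.

Section Defs.
Variable R : realFieldType.

Definition norm1 (m : nat) (v : 'cV[R]_m) : R := \sum_(i < m) `|v i 0|.
Definition norm2sq (m : nat) (v : 'cV[R]_m) : R := \sum_(i < m) (v i 0) ^+ 2.

Definition restr (p : nat) (S : {set 'I_p}) (v : 'cV[R]_p) : 'cV[R]_p :=
  \col_j (if j \in S then v j 0 else 0).

Definition supp (p : nat) (v : 'cV[R]_p) : {set 'I_p} := [set j | v j 0 != 0].

Definition Xminus (n p : nat) (X : 'M[R]_(n, p)) (a : 'I_p) : 'M[R]_(n, p) :=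
  \matrix_(i, j) (if j == a then 0 else X i j).

(* Rows of D^a: edges {i,j} (i<j) of the local graph E whose row e_i - e_j
   has a-th entry 0, i.e. i <> a and j <> a.  A row is indexed by the pair (i,j). *)
Definition edges_a (p : nat) (E : rel 'I_p) (a : 'I_p) : {set 'I_p * 'I_p} :=
  [set ij : 'I_p * 'I_p | [&& (ij.1 < ij.2)%N, E ij.1 ij.2, ij.1 != a & ij.2 != a]].

Definition Dentry (p : nat) (ij : 'I_p * 'I_p) (k : 'I_p) : R :=
  (k == ij.1)%:R - (k == ij.2)%:R.

Definition Dnorm1 (p : nat) (E : rel 'I_p) (a : 'I_p) (v : 'cV[R]_p) : R :=
  \sum_(ij in edges_a E a) `| \sum_(k < p) Dentry ij k * v k 0 |.

Definition objective (n p : nat) (X : 'M[R]_(n, p)) (a : 'I_p) (E : rel 'I_p)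
  (lam mu : R) (th : 'cV[R]_p) : R :=
  n%:R^-1 * norm2sq (col a X - Xminus X a *m th)
  + lam * norm1 th + mu * Dnorm1 E a th.

End Defs.

(* Main.v *)
Require Import Defs.
From HB Require Import structures.
From mathcomp Require Import all_boot all_order all_algebra.
From mathcomp Require Import ring lra.
Import Order.TTheory GRing.Theory Num.Theory.
Local Open Scope ring_scope.

Lemma n2_sub (R : realFieldType) m (u v : 'cV[R]_m) :
  norm2sq (u - v) = norm2sq u - 2 * \sum_i u i 0 * v i 0 + norm2sq v.
Proof.
rewrite /norm2sq mulr_sumr -sumrN -!big_split /=; apply eq_bigr => i _.
rewrite !mxE; ring.
Qed.

Lemma dot_bound (R : realFieldType) (n p : nat) (Z : 'M[R]_(n, p)) (a : 'I_p)
   (eps : 'cV[R]_n) (d : 'cV[R]_p) (K : R) :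
  (forall i, Z i a = 0) -> 0 <= K ->
  (forall j : 'I_p, j != a -> 2 / n%:R * `| \sum_(i < n) eps i 0 * Z i j | <= K) ->
  2 / n%:R * `| \sum_i eps i 0 * (Z *m d) i 0 | <= K * norm1 d.
Proof.
move=> Za K0 HK.
have e : \sum_i eps i 0 * (Z *m d) i 0 = \sum_j d j 0 * \sum_(i < n) eps i 0 * Z i j.
  under eq_bigr do rewrite mxE big_distrr /=.
  rewrite exchange_big; apply eq_bigr => j _; rewrite big_distrr; apply eq_bigr => i _ /=.
  ring.
have n0 : 0 <= 2 / n%:R :> R by apply: divr_ge0.
rewrite e; apply: (le_trans (ler_wpM2l n0 (ler_norm_sum _ _ _))).
rewrite /norm1 mulr_sumr mulr_sumr; apply ler_sum => j _.
rewrite normrM mulrCA mulrC; apply: ler_wpM2r; first exact: normr_ge0.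
case: (eqVneq j a) => [->|hj]; last exact: HK.
rewrite big1 ?normr0 ?mulr0 // => i _; by rewrite Za mulr0.
Qed.

Lemma Dentry_le1 (R : realFieldType) p (ij : 'I_p * 'I_p) k : `|Dentry R ij k| <= 1.
Proof.
rewrite /Dentry; case: (k == ij.1); case: (k == ij.2);
  by rewrite /= ?subrr ?subr0 ?sub0r ?normrN ?normr1 ?normr0.
Qed.

Lemma Dnorm_bound (R : realFieldType) p (E : rel 'I_p) a (B : nat) (v : 'cV[R]_p) :
  (forall k : 'I_p, (#|[set ij in edges_a E a | Dentry R ij k != (0 : R)%R]| <= B)%N) ->
  Dnorm1 E a v <= B%:R * norm1 v.
Proof.
move=> HB; rewrite /Dnorm1; set e := edges_a E a in HB *; clearbody e.
apply: (le_trans (y := \sum_(ij in e) \sum_k `|Dentry R ij k| * `|v k 0|)).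
  apply ler_sum => ij _; apply: le_trans (ler_norm_sum _ _ _) _.
  by apply ler_sum => k _; rewrite normrM.
rewrite exchange_big /norm1 mulr_sumr; apply ler_sum => k _.
rewrite -mulr_suml; apply: (ler_wpM2r (normr_ge0 (v k 0))).
apply: (le_trans (y := \sum_(ij in [set ij in e | Dentry R ij k != 0]) 1)).
  rewrite big_mkcond [X in _ <= X]big_mkcond /=; apply ler_sum => ij _.
  rewrite inE; case: (ij \in e) => //=.
  case: (eqVneq (Dentry R ij k) 0) => [->|_] /=; first by rewrite normr0.
  exact: Dentry_le1.
by rewrite sumr_const ler_nat.
Qed.

Lemma Dnorm_tri (R : realFieldType) p (E : rel 'I_p) a (u w : 'cV[R]_p) :
  Dnorm1 E a u <= Dnorm1 E a w + Dnorm1 E a (u - w).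
Proof.
rewrite /Dnorm1 -big_split; apply ler_sum => ij _ /=.
have -> : \sum_k Dentry R ij k * u k 0 =
   \sum_k Dentry R ij k * w k 0 + \sum_k Dentry R ij k * (u - w) k 0.
  rewrite -big_split; apply eq_bigr => k _ /=; rewrite !mxE; ring.
exact: ler_normD.
Qed.

Lemma norm1_split (R : realFieldType) p (th t0 : 'cV[R]_p) :
  norm1 (th - t0) = norm1 (restr (supp t0) th - restr (supp t0) t0)
                    + norm1 (restr (~: supp t0) th).
Proof.
rewrite /norm1 -big_split; apply eq_bigr => k _ /=; rewrite !mxE in_setC.
case: (boolP (k \in supp t0)) => hk /=; first by rewrite normr0 addr0.
move: hk; rewrite inE negbK => /eqP ->; by rewrite subrr normr0 add0r subr0.
Qed.

Lemma norm1_diff (R : realFieldType) p (th t0 : 'cV[R]_p) :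
  norm1 t0 + norm1 (restr (~: supp t0) th) <=
  norm1 th + norm1 (restr (supp t0) th - restr (supp t0) t0).
Proof.
rewrite /norm1 -!big_split; apply ler_sum => k _ /=; rewrite !mxE in_setC.
case: (boolP (k \in supp t0)) => hk /=.
  rewrite normr0 addr0; have := ler_distD (th k 0) 0 (t0 k 0).
  by rewrite !sub0r !normrN.
move: hk; rewrite inE negbK => /eqP ->; by rewrite subrr !normr0 add0r addr0.
Qed.
Arguments Dnorm_tri {R p}.
Arguments Dnorm_bound {R p E a B}.
Arguments norm1_split {R p}.
Arguments norm1_diff {R p}.
Theorem mainTheorem12 (R : realFieldType) (n p : nat) (X : 'M[R]_(n, p)) (a : 'I_p)
  (E : rel 'I_p) (B : nat) (theta0 : 'cV[R]_p) (eps : 'cV[R]_n)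
  (lam0 mu0 lam mu : R) (thetahat : 'cV[R]_p) :
  (0 < n)%N ->
  (forall i j, E i j = E j i) ->
  (forall k : 'I_p, (#|[set ij in edges_a E a | Dentry R ij k != (0 : R)%R]| <= B)%N) ->
  col a X = Xminus X a *m theta0 + eps ->
  0 < lam0 -> 0 < mu0 ->
  (forall j : 'I_p, j != a ->
     2 / n%:R * `| \sum_(i < n) eps i 0 * Xminus X a i j | <= lam0 + B%:R * mu0) ->
  lam >= 2 * lam0 -> mu >= 2 * mu0 ->
  (forall th : 'cV[R]_p, objective X a E lam mu thetahat <= objective X a E lam mu th) ->
  2 / n%:R * norm2sq (Xminus X a *m (thetahat - theta0))
  + (lam - 3 * B%:R * mu) * norm1 (restr (~: supp theta0) thetahat)
  <= (3 * lam + 5 * B%:R * mu)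
     * norm1 (restr (supp theta0) thetahat - restr (supp theta0) theta0).
Proof.
move=> n0 _ HB hm l0 m0 HL hl hmu hmin.
set Z := Xminus X a.
set d := thetahat - theta0.
set s := norm1 (restr (supp theta0) thetahat - restr (supp theta0) theta0).
set t := norm1 (restr (~: supp theta0) thetahat).
have Za : forall i, Z i a = 0 by move=> i; rewrite /Z mxE eqxx.
have hobj := hmin theta0; rewrite /objective in hobj.
have e1 : col a X - Z *m thetahat = eps - Z *m d.
  by rewrite hm /d mulmxBr opprB [Z *m theta0 + eps]addrC -addrA.
have e2 : col a X - Z *m theta0 = eps by rewrite hm [Z *m theta0 + eps]addrC addrK.
rewrite -/Z e1 e2 n2_sub in hobj.
have hd := @dot_bound R n p Z a eps d (lam0 + B%:R * mu0) Za
   (addr_ge0 (ltW l0) (mulr_ge0 (ler0n _ _) (ltW m0))) HL.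
have hD1 := Dnorm_tri E a theta0 thetahat.
have hD2 := Dnorm_bound (theta0 - thetahat) HB.
have hs := norm1_split thetahat theta0; rewrite -/d -/s -/t in hs.
have hn := norm1_diff thetahat theta0; rewrite -/s -/t in hn.
have h01 : norm1 (theta0 - thetahat) = norm1 d.
  by rewrite /norm1; apply eq_bigr => k _; rewrite !mxE distrC.
rewrite h01 hs in hD2.
rewrite hs in hd.
set N := n%:R^-1 : R.
have N0 : 0 < N by rewrite invr_gt0 ltr0n.
set dot := \sum_i eps i 0 * (Z *m d) i 0 in hobj hd.
have hdot : N * dot <= N * `|dot| by apply: ler_wpM2l; [exact: ltW|exact: ler_norm].
set q := norm2sq (Z *m d) in hobj *.
set b := B%:R : R in hd hD2 *.
have b0 : 0 <= b by apply: ler0n.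
have s0 : 0 <= s by apply: sumr_ge0 => i _; apply: normr_ge0.
have t0 : 0 <= t by apply: sumr_ge0 => i _; apply: normr_ge0.
have lam0' : 0 <= lam by lra.
have mu0' : 0 <= mu by lra.
have hDm : mu * Dnorm1 E a theta0 <= mu * Dnorm1 E a thetahat + mu * (b * (s + t)).
  rewrite -mulrDr; apply: ler_wpM2l => //; apply: le_trans hD1 _; by rewrite lerD2l.
have hLm : lam * norm1 theta0 + lam * t <= lam * norm1 thetahat + lam * s.
  by rewrite -!mulrDr; apply: ler_wpM2l.
have P1 : 0 <= (lam - 2 * lam0) * (s + t) by apply: mulr_ge0; lra.
have P2 : 0 <= b * (mu - 2 * mu0) * (s + t) by apply: mulr_ge0; [apply: mulr_ge0|]; lra.
have P3 : 0 <= b * mu * s by apply: mulr_ge0; [apply: mulr_ge0|]; lra.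
rewrite -/N in hobj hd *.
lra.
Qed.
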